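(* Let $\gamma$ be a gauge on $\mathbb{R}^d$ with skewness $\sigma$ and let $v\in\mathrm{SD}_\gamma$. Let $C\subset\mathbb{R}^d$ be a finite set with positive weights $w_c$, $w_C=\sum_{c\in C}w_c$, and for $M>0$ define $h_M(x)=\sum_{c\in C}w_c\,\gamma(x-c+Mv)$. Let $U\subset\mathbb{R}^d$ be bounded and $\tau>0$. Then there exists $M_{U,\tau}>0$ such that for every $M>M_{U,\tau}$, every $u\in U$ and every $q\in\partial h_M(u)$ we have $\gamma^\circ(-q)>\sigma w_C-\tau$.
   Context: A gauge $\gamma$ on $\mathbb{R}^d$ is the Minkowski functional of a convex compact set $B_\gamma$ with the origin in its interior (not necessarily symmetric). The dual gauge is $\gamma^\circ(p)=\max\{\langle p,x\rangle:\gamma(x)=1\}$. $\partial$ denotes the convex subdifferential. The skewness is $\sigma=\sup_{x\neq0}\gamma(x)/\gamma(-x)$ and $\mathrm{SD}_\gamma=\{v:\gamma(v)=\sigma\gamma(-v)=1\}$. *)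

(* Defs.v *)
From HB Require Import structures.
From mathcomp Require Import all_boot all_order all_algebra.
From mathcomp Require Import all_classical all_reals all_analysis.
Set Implicit Arguments. Unset Strict Implicit. Unset Printing Implicit Defensive.
Import Order.TTheory GRing.Theory Num.Theory.
Import numFieldNormedType.Exports.
Local Open Scope classical_set_scope.
Local Open Scope ring_scope.

Section Gauges.
Variables (R : realType) (d : nat).
Notation V := 'rV[R]_d.

Definition dotv (p x : V) : R := \sum_(i < d) p 0 i * x 0 i.

Definition convex_set_rV (B : set V) : Prop :=
  forall x y : V, B x -> B y -> forall l : R, 0 <= l <= 1 ->
    B (l *: x + (1 - l) *: y).

Definition gauge_body (B : set V) : Prop :=
  [/\ convex_set_rV B, compact B & nbhs (0 : V) B].

Definition gauge (B : set V) (x : V) : R :=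
  inf [set t : R | 0 < t /\ exists b, B b /\ x = t *: b].

Definition gauge_dual (B : set V) (p : V) : R :=
  sup [set dotv p x | x in [set x | gauge B x = 1]].

Definition skewness (B : set V) : R :=
  sup [set gauge B x / gauge B (- x) | x in [set x : V | x != 0]].

Definition SD (B : set V) : set V :=
  [set v | gauge B v = 1 /\ skewness B * gauge B (- v) = 1].

Definition subdiff (f : V -> R) (u : V) : set V :=
  [set q | forall y : V, f u + dotv q (y - u) <= f y].

Definition hM (B : set V) (C : seq V) (w : V -> R) (v : V) (M : R) (x : V) : R :=
  \sum_(c <- C) w c * gauge B (x - c + M *: v).

End Gauges.

(* Main.v *)
Require Import Defs.
From HB Require Import structures.
From mathcomp Require Import all_boot all_order all_algebra.
From mathcomp Require Import all_classical all_reals all_analysis.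
From mathcomp Require Import ring lra.
Import Order.TTheory GRing.Theory Num.Theory.
Import numFieldNormedType.Exports.
Local Open Scope classical_set_scope.
Local Open Scope ring_scope.
Lemma body_ball {R : realType} {d : nat} {B : set 'rV[R]_d} :
  gauge_body B -> exists2 r : R, 0 < r & forall y, `|y| < r -> B y.
Proof.
case=> _ _ /nbhs_norm0P [r r0 Hr]; exists r => // y Hy; exact: Hr.
Qed.

Lemma gauge_mem {R : realType} {d : nat} (B : set 'rV[R]_d) r (x : 'rV[R]_d) :
  0 < r -> (forall y, `|y| < r -> B y) ->
  [set t : R | 0 < t /\ exists b, B b /\ x = t *: b] ((`|x| + 1) / r).
Proof.
move=> r0 Hr; have t0 : 0 < (`|x| + 1) / r by rewrite divr_gt0 // ltr_wpDl.
split => //; exists (((`|x| + 1) / r)^-1 *: x); split; last first.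
  by rewrite scalerA mulfV ?scale1r // gt_eqF.
apply: Hr; rewrite normrZ invrM ?unitfE ?gt_eqF ?invr_gt0 // ?ltr_wpDl //.
rewrite invrK ger0_norm; last by rewrite mulr_ge0 // ?invr_ge0 ltW // ltr_wpDl.
rewrite mulrAC ltr_pdivrMr ?ltr_wpDl //.
by rewrite ltr_pM2l // ltrDl.
Qed.

Lemma gauge_lb {R : realType} {d : nat} (B : set 'rV[R]_d) (x : 'rV[R]_d) :
  has_lbound [set t : R | 0 < t /\ exists b, B b /\ x = t *: b].
Proof. by exists 0 => t [t0 _]; exact: ltW. Qed.

Lemma gauge_le {R : realType} {d : nat} (B : set 'rV[R]_d) r (x : 'rV[R]_d) :
  0 < r -> (forall y, `|y| < r -> B y) -> gauge B x <= (`|x| + 1) / r.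
Proof.
move=> r0 Hr; apply: ge_inf; first exact: gauge_lb.
exact: gauge_mem.
Qed.

Lemma gauge_ge0 {R : realType} {d : nat} (B : set 'rV[R]_d) r (x : 'rV[R]_d) :
  0 < r -> (forall y, `|y| < r -> B y) -> 0 <= gauge B x.
Proof.
move=> r0 Hr; apply: lb_le_inf.
  by exists ((`|x| + 1) / r); exact: gauge_mem.
by move=> t [t0 _]; exact: ltW.
Qed.

Lemma gauge_adh {R : realType} {d : nat} (B : set 'rV[R]_d) r (x : 'rV[R]_d) e :
  0 < r -> (forall y, `|y| < r -> B y) -> 0 < e ->
  exists t, [/\ 0 < t, t < gauge B x + e & exists b, B b /\ x = t *: b].
Proof.
move=> r0 Hr e0.
have [t [t0 Ht] te] := @inf_adherent _ [set t : R | 0 < t /\ exists b, B b /\ x = t *: b] e e0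
  (conj (ex_intro _ _ (gauge_mem B r x r0 Hr)) (gauge_lb B x)).
by exists t.
Qed.

Lemma gauge_le_mem {R : realType} {d : nat} (B : set 'rV[R]_d) (x b : 'rV[R]_d) t :
  0 < t -> B b -> x = t *: b -> gauge B x <= t.
Proof.
move=> t0 Bb xe; apply: (ge_inf (gauge_lb B x)); split => //; by exists b.
Qed.

Lemma gauge_sub {R : realType} {d : nat} (B : set 'rV[R]_d) (a b : 'rV[R]_d) :
  gauge_body B -> gauge B (a + b) <= gauge B a + gauge B b.
Proof.
move=> hB; have [r r0 Hr] := body_ball hB.
case: hB => cvx _ _.
apply/ler_addgt0Pr => e e0.
have e20 : 0 < e / 2 by rewrite divr_gt0.
have [s [s0 se [b1 [Bb1 ea]]]] := gauge_adh B r a _ r0 Hr e20.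
have [t [t0 te [b2 [Bb2 eb]]]] := gauge_adh B r b _ r0 Hr e20.
have st0 : 0 < s + t by rewrite addr_gt0.
have l01 : 0 <= s / (s + t) <= 1.
  rewrite divr_ge0 ?ltW //= ?ltr_pdivrMr // ?mul1r ?ltrDl //.
apply: (@le_trans _ _ (s + t)); last first.
  have -> : gauge B a + gauge B b + e =
    (gauge B a + e / 2) + (gauge B b + e / 2).
    by field.
  by rewrite ltW // ltrD.
apply: (gauge_le_mem B (a + b) _ (s + t) st0 (cvx _ _ Bb1 Bb2 _ l01)).
rewrite ea eb scalerDr !scalerA; congr (_ *: _ + _ *: _); field; by rewrite gt_eqF.
Qed.

Lemma gauge_homo_le {R : realType} {d : nat} (B : set 'rV[R]_d) r (x : 'rV[R]_d) l :
  0 < r -> (forall y, `|y| < r -> B y) -> 0 < l -> gauge B (l *: x) <= l * gauge B x.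
Proof.
move=> r0 Hr l0; apply/ler_addgt0Pr => e e0.
have el0 : 0 < e / l by rewrite divr_gt0.
have [t [t0 te [b [Bb xe]]]] := gauge_adh B r x _ r0 Hr el0.
apply: (@le_trans _ _ (l * t)).
  apply: (gauge_le_mem B _ b); first by rewrite mulr_gt0.
    by [].
  by rewrite xe scalerA.
have -> : l * gauge B x + e = l * (gauge B x + e / l) by field; rewrite gt_eqF.
by rewrite ler_pM2l // ltW.
Qed.

Lemma gauge_homo {R : realType} {d : nat} (B : set 'rV[R]_d) (x : 'rV[R]_d) l :
  gauge_body B -> 0 < l -> gauge B (l *: x) = l * gauge B x.
Proof.
move=> hB l0; have [r r0 Hr] := body_ball hB.
apply/eqP; rewrite eq_le (gauge_homo_le B r) //=.
have li0 : 0 < l^-1 by rewrite invr_gt0.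
have := gauge_homo_le B r (l *: x) _ r0 Hr li0.
rewrite scalerA mulVf ?gt_eqF // scale1r => H.
by rewrite -(ler_pM2l li0) mulrA mulVf ?gt_eqF // mul1r.
Qed.

Lemma coord_le {R : realType} {d : nat} (x : 'rV[R]_d) i : `|x 0 i| <= `|x|.
Proof.
have -> : `|x| = mx_norm x by [].
rewrite mx_normrE.
exact: (le_bigmax _ (fun ij : 'I_1 * 'I_d => `|x ij.1 ij.2|) (0, i)).
Qed.

Lemma dual_ge {R : realType} {d : nat} (B : set 'rV[R]_d) (p x : 'rV[R]_d) :
  gauge_body B -> gauge B x = 1 -> dotv p x <= gauge_dual B p.
Proof.
move=> hB gx; have [r r0 Hr] := body_ball hB.
have [_ hcomp _] := hB.
have [M0 [_ HM0]] := compact_bounded hcomp.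
have HB : forall b, B b -> `|b| <= `|M0| + 1.
  move=> b Bb; apply: (HM0 (`|M0| + 1)) => //.
  by apply: (le_lt_trans (ler_norm M0)); rewrite ltrDl.
apply: ub_le_sup; last by exists x.
exists (\sum_(i < d) `|p 0 i| * (2 * (`|M0| + 1))).
move=> _ [y gy <-].
have [t [t0 te [b [Bb ye]]]] := gauge_adh B r y 1 r0 Hr ltr01.
have ny : `|y| <= 2 * (`|M0| + 1).
  rewrite ye normrZ gtr0_norm //; apply: ler_pM => //; last exact: HB.
    exact: ltW.
  by move: te; rewrite gy => te; lra.
rewrite /dotv; apply: ler_sum => i _.
apply: (le_trans (ler_norm _)); rewrite normrM ler_wpM2l //.
exact: (le_trans (coord_le y i)).
Qed.

Lemma dotvZN {R : realType} {d : nat} (q v : 'rV[R]_d) (M : R) :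
  dotv q (- (M *: v)) = - (M * dotv q v).
Proof.
rewrite /dotv mulr_sumr -sumrN; apply: eq_bigr => i _.
by rewrite !mxE; ring.
Qed.

Lemma dotvNZ {R : realType} {d : nat} (q v : 'rV[R]_d) (M : R) :
  dotv (- q) (M *: (- v)) = M * dotv q v.
Proof.
rewrite /dotv mulr_sumr; apply: eq_bigr => i _.
by rewrite !mxE; ring.
Qed.

Theorem mainTheorem3 (R : realType) (d : nat) (B : set 'rV[R]_d)
  (hB : gauge_body B) (v : 'rV[R]_d) (hv : SD B v)
  (C : seq 'rV[R]_d) (hC : uniq C) (w : 'rV[R]_d -> R)
  (hw : forall c, c \in C -> 0 < w c)
  (U : set 'rV[R]_d) (hU : bounded_set U) (tau : R) (htau : 0 < tau) :
  exists MU : R, 0 < MU /\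
    forall M : R, MU < M -> forall u : 'rV[R]_d, U u ->
      forall q : 'rV[R]_d, subdiff (hM B C w v M) u q ->
        skewness B * (\sum_(c <- C) w c) - tau < gauge_dual B (- q).
Proof.
have [r r0 Hr] := body_ball hB.
case: hv => gv sv.
set sig := skewness B in sv *.
have gnv0 : 0 <= gauge B (- v) := gauge_ge0 B r (- v) r0 Hr.
have sig0 : 0 < sig.
  have gnv : 0 < gauge B (- v).
    by rewrite lt_neqAle gnv0 andbT; apply/eqP => H; move: sv; rewrite -H mulr0 => /eqP; rewrite eq_sym oner_eq0.
  by rewrite -(pmulr_lgt0 _ gnv) sv ltr01.
have [M0 [_ HM0]] := hU.
set rho := `|M0| + 1.
have HU : forall u, U u -> `|u| <= rho.
  move=> u Uu; apply: (HM0 rho) => //.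
  by apply: (le_lt_trans (ler_norm M0)); rewrite ltrDl.
have rho0 : 0 <= rho by rewrite addr_ge0.
set k := fun c : 'rV[R]_d => 2 * ((`|c| + rho + 1) / r).
set K := \sum_(c <- C) w c * k c.
have K0 : 0 <= K.
  rewrite /K big_seq; apply: sumr_ge0 => c cC.
  rewrite /k; apply: mulr_ge0; first exact: ltW (hw c cC).
  apply: mulr_ge0 => //; apply: divr_ge0; last exact: ltW.
  by rewrite !addr_ge0.
have sKt : 0 <= sig * K / tau.
  by apply: divr_ge0; [apply: mulr_ge0 => //; exact: ltW | exact: ltW].
exists (sig * K / tau + 1); split; first lra.
move=> M HM u Uu q Hq.
have M0' : 0 < M.
  lra.
have sKM : sig * K < tau * M.
  have : sig * K / tau < M by lra.
  by rewrite (ltr_pdivrMr _ _ htau) [tau * M]mulrC.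
have H1 := Hq (u - M *: v).
have e1 : u - M *: v - u = - (M *: v) by rewrite addrC addKr.
rewrite e1 dotvZN /hM in H1.
have e2 : forall c, u - M *: v - c + M *: v = u - c.
  by move=> c; rewrite addrAC subrK.
have e3 : \sum_(c <- C) w c * gauge B (u - M *: v - c + M *: v) =
   \sum_(c <- C) w c * gauge B (u - c) by apply: eq_bigr => c _; rewrite e2.
rewrite e3 in H1.
have H2 : \sum_(c <- C) (w c * M - w c * k c) <=
  \sum_(c <- C) (w c * gauge B (u - c + M *: v) - w c * gauge B (u - c)).
  rewrite big_seq [X in _ <= X]big_seq; apply: ler_sum => c cC.
  rewrite -!mulrBr; apply: ler_wpM2l; first exact: ltW (hw c cC).
  have t1 : M <= gauge B (u - c + M *: v) + gauge B (c - u).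
    have gM : gauge B (M *: v) = M by rewrite gauge_homo // gv mulr1.
    rewrite -{1}gM.
    have {1}-> : M *: v = (u - c + M *: v) + (c - u).
      by rewrite addrAC subrKA subrr add0r.
    exact: gauge_sub.
  have ncu : `|c - u| <= `|c| + rho.
    by apply: (le_trans (ler_normB _ _)); rewrite lerD2l HU.
  have t2 : gauge B (c - u) <= (`|c| + rho + 1) / r.
    apply: (le_trans (gauge_le B r (c - u) r0 Hr)).
    by apply: ler_wpM2r; [rewrite invr_ge0 ltW | lra].
  have t3 : gauge B (u - c) <= (`|c| + rho + 1) / r.
    apply: (le_trans (gauge_le B r (u - c) r0 Hr)).
    have ncu' : `|u - c| <= `|c| + rho by rewrite distrC.
    by apply: ler_wpM2r; [rewrite invr_ge0 ltW | lra].
  rewrite /k; lra.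
rewrite !sumrB -mulr_suml -/K in H2.
set wC := \sum_(c <- C) w c in H2 *.
have H3 : sig * dotv q v <= gauge_dual B (- q).
  rewrite -dotvNZ; apply: dual_ge => //.
  by rewrite gauge_homo.
have P1 : 0 <= sig * (M * dotv q v - (wC * M - K)) by apply: mulr_ge0; lra.
have P2 : 0 <= M * (gauge_dual B (- q) - sig * dotv q v) by apply: mulr_ge0; lra.
rewrite -subr_gt0 -(pmulr_rgt0 _ M0').
have -> : M * (gauge_dual B (- q) - (sig * wC - tau)) =
  M * (gauge_dual B (- q) - sig * dotv q v) + sig * (M * dotv q v - (wC * M - K))
  + (tau * M - sig * K) by ring.
lra.
Qed.
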